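(* Let $X=\operatorname{diag}(x_1,\dots,x_s)$ and $Y=\operatorname{diag}(y_1,\dots,y_s)$ be real diagonal matrices. The following are equivalent: (i) there exist unitary $U,V\in \mathcal U(s)$ such that $XUY=V$; (ii) there exists a permutation $\sigma$ of $\{1,\dots,s\}$ such that $|x_iy_{\sigma(i)}|=1$ for every $i\in\{1,\dots,s\}$.
   Context: $\mathcal U(s)$ denotes the group of $s\times s$ complex unitary matrices. *)

(* Defs.v *)
From mathcomp Require Import all_boot all_order all_algebra perm.
From mathcomp Require Import complex.
From mathcomp Require Import reals.
Set Implicit Arguments. Unset Strict Implicit. Unset Printing Implicit Defensive.
Import Order.TTheory GRing.Theory Num.Theory.
Local Open Scope ring_scope.

Definition adjmx (C : numClosedFieldType) (m n : nat) (A : 'M[C]_(m, n)) : 'M[C]_(n, m) :=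
  (map_mx Num.conj A)^T.

Definition unitary_mx (C : numClosedFieldType) (s : nat) (U : 'M[C]_s) : Prop :=
  U *m adjmx U = 1%:M /\ adjmx U *m U = 1%:M.

Definition rdiag (R : realType) (s : nat) (x : 'I_s -> R) : 'M[R[i]]_s :=
  \matrix_(i, j) ((x i)%:C%C *+ (i == j)).

(* Main.v *)
Require Import Defs.
From mathcomp Require Import all_boot all_order all_algebra perm.
From mathcomp Require Import complex reals.
From mathcomp Require Import lra.
Import Order.TTheory GRing.Theory Num.Theory.
Local Open Scope ring_scope.

Section Aux.
Variable R : realType.
Local Notation C := (R[i]).

Lemma rdiagE s (x : 'I_s -> R) : rdiag x = diag_mx (\row_i ((x i)%:C)%C).
Proof. by apply/matrixP => i j; rewrite !mxE. Qed.

Lemma eq_rdiag s (a b : 'I_s -> R) : (forall i, a i = b i) -> rdiag a = rdiag b.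
Proof. by move=> H; apply/matrixP => i j; rewrite !mxE H. Qed.

Lemma rdiagM s (a b : 'I_s -> R) :
  rdiag a *m rdiag b = rdiag (fun i => a i * b i).
Proof.
rewrite !rdiagE mulmx_diag; congr diag_mx; apply/rowP => j.
by rewrite !mxE rmorphM.
Qed.

Lemma rdiag1 s : rdiag (fun _ : 'I_s => (1 : R)) = 1%:M.
Proof. by apply/matrixP => i j; rewrite !mxE. Qed.

Lemma adjmxM s (A B : 'M[C]_s) : adjmx (A *m B) = adjmx B *m adjmx A.
Proof. by rewrite /adjmx map_mxM trmx_mul. Qed.

Lemma adjmxE s (A : 'M[C]_s) i j : adjmx A i j = Num.conj (A j i).
Proof. by rewrite !mxE. Qed.

Lemma adj_rdiag s (x : 'I_s -> R) : adjmx (rdiag x) = rdiag x.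
Proof.
apply/matrixP => i j; rewrite !mxE.
have [->|ne] := eqVneq i j; first by rewrite /= ?eqxx /= ?mulr1n; exact: conjc_real.
by rewrite !mulr0n rmorph0.
Qed.

Lemma entryXAY s (x y : 'I_s -> R) (A : 'M[C]_s) i j :
  (rdiag x *m A *m rdiag y) i j = (x i)%:C%C * A i j * (y j)%:C%C.
Proof. by rewrite !rdiagE mul_mx_diag mul_diag_mx !mxE. Qed.

Lemma char_poly_sim n (P Q A : 'M[C]_n) :
  P *m Q = 1%:M -> char_poly (P *m A *m Q) = char_poly A.
Proof.
move=> PQ; rewrite /char_poly /char_poly_mx.
have -> : 'X%:M - map_mx polyC (P *m A *m Q) =
   map_mx polyC P *m ('X%:M - map_mx polyC A) *m map_mx polyC Q.
  rewrite mulmxBr mulmxBl !map_mxM; congr (_ - _).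
  by rewrite scalar_mxC -mulmxA -map_mxM PQ map_mx1 mulmx1.
rewrite !det_mulmx mulrAC -det_mulmx -map_mxM PQ map_mx1 det1 mul1r //.
Qed.

Lemma char_poly_rdiag s (d : 'I_s -> R) :
  char_poly (rdiag d) = \prod_(i < s) ('X - ((d i)%:C%C)%:P).
Proof.
rewrite char_poly_trig; last by rewrite rdiagE; exact: diag_mx_is_trig.
by apply: eq_bigr => i _; rewrite mxE eqxx mulr1n.
Qed.

Lemma big_mktuple n (a : 'I_n -> C) :
  \prod_(z <- [tuple a i | i < n]) ('X - z%:P) = \prod_(i < n) ('X - (a i)%:P).
Proof. by rewrite big_tuple; apply: eq_bigr => i _; rewrite tnth_mktuple. Qed.

Lemma prod_perm n (a b : 'I_n -> C) :
  \prod_(i < n) ('X - (a i)%:P) = \prod_(i < n) ('X - (b i)%:P) ->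
  exists p : 'S_n, forall i, a i = b (p i).
Proof.
move=> E.
have : perm_eq [tuple a i | i < n] [tuple b i | i < n].
  by apply: prod_XsubC_eq; rewrite !big_mktuple.
move/tuple_permP => [p hp]; exists p => i.
have hp' := val_inj hp.
by have := congr1 (fun t => tnth t i) hp'; rewrite /= !tnth_mktuple.
Qed.

Lemma unitary1 s (A : 'M[C]_s) : A *m adjmx A = 1%:M -> unitary_mx A.
Proof. by move=> h; split => //; apply: mulmx1C. Qed.

End Aux.

Theorem lemma3p8 (R : realType) (s : nat) (x y : 'I_s -> R) :
  (exists U V : 'M[R[i]]_s,
      unitary_mx U /\ unitary_mx V /\ rdiag x *m U *m rdiag y = V)
  <-> (exists sigma : 'S_s, forall i : 'I_s, `|x i * y (sigma i)| = 1).
Proof.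
split.
- case=> U [V [[hU1 hU2] [[hV1 _] hXUY]]].
  set M := U *m rdiag (fun i => y i * y i) *m adjmx U.
  have h1 : rdiag x *m (M *m rdiag x) = 1%:M.
    rewrite -hV1 -hXUY !adjmxM !adj_rdiag /M -rdiagM !mulmxA //.
  have hx : forall i, x i != 0.
    move=> i; apply/eqP => x0; have := congr1 (fun A : 'M[R[i]]_s => A i i) h1.
    rewrite /= rdiagE mul_diag_mx !mxE x0 mul0r eqxx mulr1n.
    by move/eqP; rewrite eq_sym oner_eq0.
  have h2 : M *m (rdiag x *m rdiag x) = 1%:M.
    by rewrite mulmxA; apply: mulmx1C.
  set xi := fun i => (x i)^-1 * (x i)^-1.
  have XXxi : rdiag x *m rdiag x *m rdiag xi = 1%:M.
    rewrite !rdiagM -(rdiag1 R s); apply: eq_rdiag => i.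
    by rewrite /xi mulrACA mulfV ?hx // mulr1.
  have h3 : M = rdiag xi.
    by rewrite -[M]mulmx1 -XXxi !mulmxA -(mulmxA M) h2 mul1mx.
  have h4 : rdiag (fun i => y i * y i) = adjmx U *m rdiag xi *m U.
    by rewrite -h3 /M !mulmxA hU2 mul1mx -mulmxA hU2 mulmx1.
  have h5 := congr1 char_poly h4.
  rewrite char_poly_sim // !char_poly_rdiag in h5.
  have [p hp] := (@prod_perm R _ _ _ (esym h5)).
  exists p => i.
  have e1 : xi i = y (p i) * y (p i) by have := congr1 (@complex.Re R) (hp i).
  have e : (x i * y (p i)) * (x i * y (p i)) = 1.
    by rewrite mulrACA -e1 /xi mulrACA mulfV ?hx // mulr1.
  have n0 := normr_ge0 (x i * y (p i)).
  have : `|x i * y (p i)| * `|x i * y (p i)| = 1 by rewrite -normrM e normr1.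
  nra.
- case=> sigma hs.
  exists (perm_mx sigma), (rdiag x *m perm_mx sigma *m rdiag y).
  split; [apply: unitary1 | split; [apply: unitary1 | by []]].
  + by rewrite /adjmx map_perm_mx tr_perm_mx -perm_mxM mulgV perm_mx1.
  + set V := rdiag x *m perm_mx sigma *m rdiag y.
    have hV : forall i k, V i k = ((x i * y k)%:C%C) *+ (sigma i == k).
      move=> i k; rewrite /V entryXAY perm_mxEsub !mxE.
      by case: eqP => _; rewrite ?mulr1n ?mulr0n ?mulr1 ?mulr0 ?mul0r ?rmorphM.
    have e : forall i, (x i * y (sigma i)) * (x i * y (sigma i)) = 1.
      by move=> i; rewrite -expr2 -real_normK ?num_real // hs expr1n.
    apply/matrixP => i j; rewrite mxE (bigD1 (sigma i)) //= big1 ?addr0; last first.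
      by move=> k nk; rewrite hV eq_sym (negbTE nk) mulr0n mul0r.
    rewrite adjmxE !hV eqxx mulr1n mxE.
    have [<-|ne] := eqVneq i j.
      have cr : Num.conj ((x i * y (sigma i))%:C%C) = (x i * y (sigma i))%:C%C.
        exact: conjc_real.
      by rewrite eqxx !mulr1n cr -rmorphM e.
    by rewrite (inj_eq perm_inj) eq_sym (negbTE ne) !mulr0n rmorph0 mulr0.
Qed.
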